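(* Consider a switched descriptor system $E_{\sigma(t)}\dot x=A_{\sigma(t)}x$, $\sigma(t)\in\{1,\dots,N\}$, with each $A_i$ nonsingular, and suppose that for each $i=1,\dots,N$ there is a Lyapunov matrix $P_i$ for $(E_i,A_i)$ such that for every solution $x(\cdot)$ and every time $t_*$ at which $\sigma$ switches from $i$ to $j$, $$x(t_*^+)^TP_jx(t_*^+)\le x(t_*^-)^TP_ix(t_*^-).$$ Then the switched system is globally uniformly exponentially stable (GUES).
   Context: For $E,A\in\mathbb{R}^{n\times n}$ with $A$ nonsingular, $(E,A)$ denotes the descriptor system $E\dot x=Ax$; its index is the smallest $k^*\ge0$ with $\mathrm{Im}((A^{-1}E)^{k^*+1})=\mathrm{Im}((A^{-1}E)^{k^*})$ and its consistency space is $\mathcal{C}(E,A)=\mathrm{Im}((A^{-1}E)^{k^*})$. When $\mathcal{C}\ne\{0\}$, $A^{-1}E$ is a bijection of $\mathcal{C}$ onto itself, and with $\tilde A$ the inverse of its restriction, the system on $\mathcal{C}$ is $\dot x=\tilde Ax$. A symmetric $P$ is a Lyapunov matrix for $(E,A)$ if $x^TPx>0$ for nonzero $x\in\mathcal{C}$ and $2x^TP\tilde Ax<0$ for nonzero $x\in\mathcal{C}$. Switched descriptor system: the switching signal $\sigma$ is piecewise constant with values in $\{1,\dots,N\}$ and finitely many discontinuities in every bounded interval. A solution is a function $x(\cdot)$ that is differentiable and satisfies $E_{\sigma(t)}\dot x(t)=A_{\sigma(t)}x(t)$ at every $t$ where $\sigma$ is continuous (so $x(t)\in\mathcal{C}(E_{\sigma(t)},A_{\sigma(t)})$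 there), and has one-sided limits $x(t_*^-)$, $x(t_*^+)$ at each discontinuity $t_*$ of $\sigma$; the differential equation is not required at discontinuities, and the relation between $x(t_*^+)$ and $x(t_*^-)$ as well as which switches are allowed are part of the system specification. The system is GUES if there exist $\beta,\alpha>0$ such that every solution satisfies $\|x(t)\|\le\beta e^{-\alpha(t-t_0)}\|x(t_0)\|$ for all $t\ge t_0$. *)

(* Defs.v *)
From Stdlib Require Import Reals Lra Lia.
Open Scope R_scope.

(** Vectors in R^n are [nat -> R], n x n matrices are [nat -> nat -> R];
    only indices < n are meaningful. *)
Definition vec := nat -> R.
Definition mat := nat -> nat -> R.

Fixpoint sumR (n : nat) (f : nat -> R) : R :=
  match n with O => 0 | S m => sumR m f + f m end.

Definition veq (n : nat) (x y : vec) : Prop := forall i, (i < n)%nat -> x i = y i.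
Definition vzero : vec := fun _ => 0.

Definition mv (n : nat) (M : mat) (x : vec) : vec :=
  fun i => sumR n (fun j => M i j * x j).
Definition mm (n : nat) (M K : mat) : mat :=
  fun i k => sumR n (fun j => M i j * K j k).
Definition idm : mat := fun i j => if Nat.eqb i j then 1 else 0.
Fixpoint mpow (n : nat) (M : mat) (k : nat) : mat :=
  match k with O => idm | S k' => mm n M (mpow n M k') end.

Definition is_inverse (n : nat) (A Ainv : mat) : Prop :=
  forall i j, (i < n)%nat -> (j < n)%nat ->
    mm n A Ainv i j = idm i j /\ mm n Ainv A i j = idm i j.

Definition inIm (n : nat) (M : mat) (y : vec) : Prop :=
  exists z, veq n (mv n M z) y.

Definition im_stable (n : nat) (M : mat) (k : nat) : Prop :=
  forall y, inIm n (mpow n M (S k)) y <-> inIm n (mpow n M k) y.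

Definition is_index (n : nat) (E Ainv : mat) (k : nat) : Prop :=
  im_stable n (mm n Ainv E) k /\
  forall j, (j < k)%nat -> ~ im_stable n (mm n Ainv E) j.

Definition inC (n : nat) (E Ainv : mat) (x : vec) : Prop :=
  exists k, is_index n E Ainv k /\ inIm n (mpow n (mm n Ainv E) k) x.

Definition bil (n : nat) (P : mat) (x y : vec) : R :=
  sumR n (fun i => x i * mv n P y i).
Definition quad (n : nat) (P : mat) (x : vec) : R := bil n P x x.

(** Lyapunov matrix for (E,A).  On C, A^{-1}E is a bijection and Atilde is the
    inverse of its restriction: Atilde x is the unique y in C with (A^{-1}E) y = x. *)
Definition lyapunov_matrix (n : nat) (E Ainv P : mat) : Prop :=
  (forall i j, (i < n)%nat -> (j < n)%nat -> P i j = P j i) /\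
  (forall x, inC n E Ainv x -> ~ veq n x vzero -> quad n P x > 0) /\
  (forall x y, inC n E Ainv x -> inC n E Ainv y ->
     veq n (mv n (mm n Ainv E) y) x -> ~ veq n x vzero ->
     2 * bil n P x y < 0).

Definition vnorm (n : nat) (x : vec) : R := sqrt (sumR n (fun i => x i ^ 2)).

Definition sig_cont (sg : R -> nat) (t : R) : Prop :=
  exists d, d > 0 /\ forall s, Rabs (s - t) < d -> sg s = sg t.

Definition piecewise_constant (ts : R) (sg : R -> nat) : Prop :=
  (forall b, ts < b -> exists (m : nat) (pts : nat -> R),
     pts O = ts /\ pts m = b /\
     (forall k, (k < m)%nat -> pts k < pts (S k)) /\
     (forall k s s', (k < m)%nat -> pts k < s < pts (S k) ->
        pts k < s' < pts (S k) -> sg s = sg s')) /\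
  (forall t, ts <= t -> exists d, d > 0 /\ forall s, t <= s < t + d -> sg s = sg t).

Definition left_lim (n : nat) (x : R -> vec) (t : R) (l : vec) : Prop :=
  forall eps, eps > 0 -> exists d, d > 0 /\
    forall s, t - d < s < t -> forall i, (i < n)%nat -> Rabs (x s i - l i) < eps.
Definition right_lim (n : nat) (x : R -> vec) (t : R) (l : vec) : Prop :=
  forall eps, eps > 0 -> exists d, d > 0 /\
    forall s, t < s < t + d -> forall i, (i < n)%nat -> Rabs (x s i - l i) < eps.

Definition has_deriv (n : nat) (x : R -> vec) (t : R) (dx : vec) : Prop :=
  forall i, (i < n)%nat -> derivable_pt_lim (fun s => x s i) t (dx i).

(** (ts, sg, x) is a solution of the switched descriptor system on [ts, +oo).
    Convention: at switching instants (and at ts) x is right-continuous. *)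
Definition is_solution (n N : nat) (E A : nat -> mat) (ts : R)
    (sg : R -> nat) (x : R -> vec) : Prop :=
  (forall t, ts <= t -> (1 <= sg t <= N)%nat) /\
  piecewise_constant ts sg /\
  right_lim n x ts (x ts) /\
  (forall t, ts < t -> sig_cont sg t ->
     exists dx, has_deriv n x t dx /\
       veq n (mv n (E (sg t)) dx) (mv n (A (sg t)) (x t))) /\
  (forall t, ts < t -> ~ sig_cont sg t ->
     (exists xm, left_lim n x t xm) /\ right_lim n x t (x t)).

(** sigma switches from i to j at t (sigma is right-continuous, so sg t = j) *)
Definition switch_at (sg : R -> nat) (t : R) (i j : nat) : Prop :=
  ~ sig_cont sg t /\
  (exists d, d > 0 /\ forall s, t - d < s < t -> sg s = i) /\
  sg t = j.

Definition GUES (n : nat) (S : R -> (R -> nat) -> (R -> vec) -> Prop) : Prop :=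
  exists beta alpha, beta > 0 /\ alpha > 0 /\
    forall ts sg x, S ts sg x -> forall t0 t, ts <= t0 -> t0 <= t ->
      vnorm n (x t) <= beta * exp (- alpha * (t - t0)) * vnorm n (x t0).

(* Main.v *)
Require Import Defs.
From Stdlib Require Import Reals.
Open Scope R_scope.
Module CORE.
From HB Require Import structures.
From mathcomp Require Import all_boot all_order all_algebra.
From mathcomp Require Import boolp classical_sets reals topology normedtype derive.
From mathcomp Require Import Rstruct.
Import Order.TTheory GRing.Theory Num.Theory.
Import numFieldNormedType.Exports numFieldTopology.Exports.
Local Open Scope classical_set_scope.
Local Open Scope ring_scope.

Section core.
Variables (R : realType) (n : nat).
Definition qf (Q : 'M[R]_n) (v : 'rV[R]_n) : R := (v *m Q *m v^T) 0 0.

Lemma qfE Q v : qf Q v = \sum_j (\sum_i v 0 i * Q i j) * v 0 j.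
Proof. by rewrite /qf !mxE; apply: eq_bigr => j _; rewrite !mxE. Qed.

Lemma cont_sum (I : Type) (r : seq I) (F : I -> 'rV[R]_n -> R) :
  (forall i, continuous (F i)) -> continuous (fun v => \sum_(i <- r) F i v).
Proof.
move=> HF; elim: r => [|a r IH].
  rewrite (_ : (fun v => _) = fun _ => 0); first exact: cst_continuous.
  by apply: funext => v; rewrite big_nil.
rewrite (_ : (fun v => _) = fun v => F a v + \sum_(i <- r) F i v); last first.
  by apply: funext => v; rewrite big_cons.
by move=> x; apply: continuousD; [exact: HF | exact: IH].
Qed.

Lemma qf_cont Q : continuous (qf Q).
Proof.
rewrite (_ : qf Q = fun v => \sum_j (\sum_i v 0 i * Q i j) * v 0 j); last first.
  by apply: funext => v; rewrite qfE.
apply: cont_sum => j x; apply: continuousM; last exact: coord_continuous.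
apply: cont_sum => i y; apply: continuousM; first exact: coord_continuous.
exact: cst_continuous.
Qed.

Lemma qf1E (v : 'rV[R]_n) : qf 1%:M v = \sum_j v 0 j ^+ 2.
Proof. rewrite qfE; apply: eq_bigr => j _.
rewrite (bigD1 j) //= big1 ?addr0; first by rewrite mxE eqxx mulr1 expr2.
by move=> i /negbTE ij; rewrite mxE ij mulr0.
Qed.

Lemma qf1_ge0 (v : 'rV[R]_n) : 0 <= qf 1%:M v.
Proof. by rewrite qf1E; apply: sumr_ge0 => j _; exact: sqr_ge0. Qed.

Lemma qf1_eq0 (v : 'rV[R]_n) : qf 1%:M v = 0 -> v = 0.
Proof.
rewrite qf1E => /eqP; rewrite psumr_eq0 => [/allP H|j _]; last exact: sqr_ge0.
apply/rowP => j; rewrite mxE; have := H j (mem_index_enum j).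
by rewrite implyTb sqrf_eq0 => /eqP.
Qed.

Lemma qfZ (Q : 'M[R]_n) (a : R) (v : 'rV[R]_n) : qf Q (a *: v) = a ^+ 2 * qf Q v.
Proof.
rewrite !qfE mulr_sumr; apply: eq_bigr => j _.
rewrite mxE; under eq_bigr do rewrite mxE -mulrA.
by rewrite -mulr_sumr mulrACA expr2.
Qed.

Lemma qf0 (Q : 'M[R]_n) : qf Q 0 = 0.
Proof. by rewrite /qf !mul0mx mxE. Qed.

Lemma coord_sq_le (v : 'rV[R]_n) j : v 0 j ^+ 2 <= qf 1%:M v.
Proof.
rewrite qf1E (bigD1 j) //= lerDl; apply: sumr_ge0 => i _; exact: sqr_ge0.
Qed.

Lemma core (Q B : 'M[R]_n) : exists m : R,
  (forall v, (v <= B)%MS -> m * qf 1%:M v <= qf Q v) /\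
  ((forall v, (v <= B)%MS -> v != 0 -> 0 < qf Q v) -> 0 < m).
Proof.
pose S := [set v : 'rV[R]_n | (v <= B)%MS /\ qf 1%:M v = 1].
have scale v : (v <= B)%MS -> v != 0 ->
    let w := (Num.sqrt (qf 1%:M v))^-1 *: v in
    S w /\ qf Q v = qf Q w * qf 1%:M v.
  move=> vB v0 w; have qp : 0 < qf 1%:M v.
    rewrite lt0r qf1_ge0 andbT; apply/negP => /eqP /qf1_eq0 h.
    by rewrite h eqxx in v0.
  have sq : (Num.sqrt (qf 1%:M v))^-1 ^+ 2 = (qf 1%:M v)^-1.
    by rewrite exprVn sqr_sqrtr // ltW.
  split; first split.
  - by rewrite /w scalemx_sub.
  - by rewrite /w qfZ sq mulVf // gt_eqF.
  by rewrite /w qfZ sq mulrAC mulVf ?gt_eqF // mul1r.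
have [[v0 [v0B v01]] | Sne] := pselect (S !=set0); last first.
  exists 1; split; last by [].
  move=> v vB; have [->|v0] := eqVneq v 0; first by rewrite !qf0 mulr0.
  by exfalso; apply: Sne; have [h _] := scale v vB v0; exists ((Num.sqrt (qf 1%:M v))^-1 *: v).
have Scl : closed S.
  pose K := cokermx B.
  have -> : S = (qf (K *m K^T)) @^-1` [set 0] `&` (qf 1%:M) @^-1` [set 1].
    apply/seteqP; split => v /=.
      move=> [vB h2]; split; last exact: h2.
      move: vB; rewrite submxE => /eqP vK.
      by rewrite /qf mulmxA vK !mul0mx mxE.
    move=> [h1 h2]; split; last exact: h2.
    rewrite submxE; apply/eqP.
    have : qf 1%:M (v *m K) = 0.
      move: h1 => /= h1. rewrite /qf mulmx1 trmx_mul !mulmxA.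
      by move: h1; rewrite /qf !mulmxA.
    move/qf1_eq0 => h; by [].
  apply: closedI; apply: preimage_closed; try exact: closed_eq;
    by move=> x _; apply: qf_cont.
have Scp : compact S.
  have Mnco : compact [set v : 'rV[R]_n | forall i, v ord0 i \in `[(-1), 1]].
    apply: (@rV_compact R n (fun=> `[(-1), 1]%classic)).
    by move=> _; apply: segment_compact.
  apply: subclosed_compact Scl Mnco _.
  move=> v [_ v1] i /=; rewrite in_itv /=.
  have := coord_sq_le v i; rewrite v1 => h.
  by rewrite -ler_norml -(expr_le1 (n:=2)) // real_normK ?num_real.
have cf : {within S, continuous (qf Q)}.
  by apply: continuous_subspaceT; exact: qf_cont.
have S0 : S !=set0 by exists v0.
have [c cS cmin] := EVT_min_rV S0 Scp cf.
move: cS; rewrite inE => -[cB c1].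
exists (qf Q c); split.
  move=> v vB; have [->|vn0] := eqVneq v 0; first by rewrite !qf0 mulr0.
  have [wS ->] := scale v vB vn0.
  by rewrite ler_wpM2r ?qf1_ge0 // cmin // inE.
move=> pos; apply: pos => //; apply/negP => /eqP c0.
by move: c1; rewrite c0 qf0 => /eqP; rewrite eq_sym oner_eq0.
Qed.

End core.
Arguments qf {R n}. Arguments core {R n}. Arguments qf1E {R n}. Arguments qf1_ge0 {R n}.

Definition sqn (n : nat) (x : vec) : R := sumR n (fun i => pow (x i) 2).

Section conv.
Variable n : nat.
Definition rv (x : vec) : 'rV[R]_n := \row_(i < n) x i.
Definition mxT (M : mat) : 'M[R]_n := \matrix_(i < n, j < n) M j i.
Definition vr (v : 'rV[R]_n) : vec :=
  fun i => oapp (fun j : 'I_n => v 0 j) 0 (insub i).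
Definition unT (Q : 'M[R]_n) : mat := fun a b =>
  match insub b, insub a with Some i, Some j => Q i j | _, _ => 0 end.

Lemma sumR_big (f : nat -> R) k : sumR k f = \sum_(i < k) f i.
Proof. elim: k => [|k IH] /=; first by rewrite big_ord0. by rewrite big_ord_recr /= IH. Qed.

Lemma rv_veq x y : veq n x y <-> rv x = rv y.
Proof.
split => [H|E i /ssrnat.ltP hi].
  by apply/rowP => j; rewrite !mxE; apply: H; apply/ssrnat.ltP.
by have := congr1 (fun v : 'rV[R]_n => v 0 (Ordinal hi)) E; rewrite !mxE.
Qed.

Lemma rv_vr v : rv (vr v) = v.
Proof. by apply/rowP => j; rewrite !mxE /vr valK. Qed.

Lemma rv_mv M x : rv (mv n M x) = rv x *m mxT M.
Proof.
apply/rowP => j; rewrite !mxE /mv sumR_big; apply: eq_bigr => i _.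
by rewrite !mxE mulrC.
Qed.

Lemma mxT_mm M K : mxT (mm n M K) = mxT K *m mxT M.
Proof.
apply/matrixP => i j; rewrite !mxE /mm sumR_big; apply: eq_bigr => l _.
by rewrite !mxE mulrC.
Qed.

Lemma mxT_idm : mxT idm = 1%:M.
Proof.
apply/matrixP => i j; rewrite !mxE /idm.
have [->|ne] := eqVneq i j; first by rewrite PeanoNat.Nat.eqb_refl.
case: PeanoNat.Nat.eqb_spec => // h; exfalso; move/eqP: ne; apply.
by apply: val_inj.
Qed.

Lemma mxT_unT Q : mxT (unT Q) = Q.
Proof. by apply/matrixP => i j; rewrite !mxE /unT !valK. Qed.

Lemma rv0 : rv vzero = 0.
Proof. by apply/rowP => j; rewrite !mxE. Qed.

Lemma inIm_sub M y : inIm n M y <-> (rv y <= mxT M)%MS.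
Proof.
split => [[z Hz]|/submxP [D HD]].
  apply/submxP; exists (rv z); rewrite -rv_mv; apply/rv_veq => i hi.
  by rewrite Hz.
by exists (vr D); apply/rv_veq; rewrite rv_mv rv_vr HD.
Qed.

Lemma bil_qf P x y : bil n P x y = (rv y *m mxT P *m (rv x)^T) 0 0.
Proof.
rewrite -rv_mv /bil sumR_big !mxE; apply: eq_bigr => i _.
by rewrite !mxE mulrC.
Qed.

Lemma quad_qf P x : quad n P x = qf (mxT P) (rv x).
Proof. by rewrite /quad bil_qf. Qed.

Lemma sqn_qf x : sqn n x = qf 1%:M (rv x).
Proof.
rewrite qf1E /sqn sumR_big; apply: eq_bigr => i _.
by rewrite RpowE mxE.
Qed.
End conv.

Theorem LA1 n (M : mat) : exists L : mat, forall y,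
  inIm n M y <-> veq n (mv n L y) vzero.
Proof.
exists (unT n (cokermx (mxT n M))) => y.
rewrite inIm_sub rv_veq rv_mv mxT_unT rv0 submxE.
by split => [/eqP|->].
Qed.

Theorem mv_mm n A B z : veq n (mv n (mm n A B) z) (mv n A (mv n B z)).
Proof. by apply/rv_veq; rewrite !rv_mv mxT_mm mulmxA. Qed.

Theorem mv_idm n z : veq n (mv n idm z) z.
Proof. by apply/rv_veq; rewrite rv_mv mxT_idm mulmx1. Qed.

Theorem bil_sym n P x y : (forall i j, lt i n -> lt j n -> P i j = P j i) ->
  bil n P x y = bil n P y x.
Proof.
move=> HP; have ST : (mxT n P)^T = mxT n P.
  apply/matrixP => i j; rewrite !mxE; apply: HP; exact/ssrnat.ltP.
rewrite !bil_qf.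
transitivity (((rv n y *m mxT n P *m (rv n x)^T)^T) 0 0); first by rewrite [RHS]mxE.
by rewrite !trmx_mul trmxK ST mulmxA.
Qed.

Theorem quad_M n P M : exists Q : mat, forall y,
  quad n P (mv n M y) = quad n Q y.
Proof.
exists (unT n (mxT n M *m mxT n P *m (mxT n M)^T)) => y.
by rewrite !quad_qf mxT_unT /qf rv_mv trmx_mul !mulmxA.
Qed.

Theorem bil_M n P M : exists Q : mat, forall y,
  bil n P (mv n M y) y = quad n Q y.
Proof.
exists (unT n (mxT n P *m (mxT n M)^T)) => y.
by rewrite quad_qf bil_qf mxT_unT /qf rv_mv trmx_mul !mulmxA.
Qed.

Theorem quad_lower n (Q B : mat) :
  (forall v, inIm n B v -> ~ veq n v vzero -> Rlt 0 (quad n Q v)) ->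
  exists c, Rlt 0 c /\ forall v, inIm n B v -> Rle (Rmult c (sqn n v)) (quad n Q v).
Proof.
move=> pos; have [m [Hm Hp]] := core (mxT n Q) (mxT n B).
exists m; split.
  apply/RltP; apply: Hp => w wB w0.
  have := pos (vr n w); rewrite quad_qf rv_vr => h; apply/RltP; apply: h.
    by apply/inIm_sub; rewrite rv_vr.
  by move/rv_veq; rewrite rv_vr rv0 => e; rewrite e eqxx in w0.
move=> v vB; apply/RleP; rewrite sqn_qf quad_qf; apply: Hm.
exact/inIm_sub.
Qed.

Theorem quad_upper n (Q : mat) :
  exists c, Rlt 0 c /\ forall v, Rle (quad n Q v) (Rmult c (sqn n v)).
Proof.
have [m [Hm _]] := core (- mxT n Q) 1%:M.
exists (Num.max 1 (- m)); split.
  by apply/RltP; rewrite lt_max ltr01.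
move=> v; apply/RleP; rewrite sqn_qf quad_qf.
have := Hm (rv n v) (submx1 _).
have -> : qf (- mxT n Q) (rv n v) = - qf (mxT n Q) (rv n v).
  by rewrite /qf mulmxN mulNmx mxE.
rewrite lerNr => h; apply: (le_trans h).
by rewrite -mulNr ler_wpM2r ?qf1_ge0 // le_max lexx orbT.
Qed.

Section idx.
Variables (n : nat) (M : mat).
Definition Bk k := mxT n (mpow n M k).
Lemma BkS k : Bk k.+1 = Bk k *m mxT n M.
Proof. by rewrite /Bk /= mxT_mm. Qed.
Lemma Bk_comm k : Bk k *m mxT n M = mxT n M *m Bk k.
Proof.
elim: k => [|k IH]; first by rewrite /Bk /= mxT_idm mul1mx mulmx1.
by rewrite BkS [RHS]mulmxA -IH.
Qed.
Lemma BkS_sub k : (Bk k.+1 <= Bk k)%MS.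
Proof. by rewrite BkS Bk_comm submxMl. Qed.
Lemma stable_iff k : im_stable n M k <-> (Bk k <= Bk k.+1)%MS.
Proof.
split => [st|h y].
  apply/row_subP => i.
  have := proj2 (st (vr n (row i (Bk k)))).
  rewrite !inIm_sub rv_vr => H; apply: H; exact: row_sub.
rewrite !inIm_sub; split => hy.
  exact: submx_trans hy (BkS_sub k).
exact: submx_trans hy h.
Qed.

Lemma inj_stable k y : im_stable n M k -> inIm n (mpow n M k) y ->
  veq n (mv n M y) vzero -> veq n y vzero.
Proof.
move=> /stable_iff st /inIm_sub /submxP [D HD] /rv_veq.
rewrite rv_mv rv0 HD -mulmxA -BkS => /sub_kermxP DK.
have sK : (kermx (Bk k) <= kermx (Bk k.+1))%MS.
  by apply/sub_kermxP; rewrite BkS mulmxA mulmx_ker mul0mx.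
have rk : \rank (Bk k.+1) = \rank (Bk k).
  by apply/eqmx_rank; rewrite /eqmx st BkS_sub.
have sK' : (kermx (Bk k.+1) <= kermx (Bk k))%MS.
  by rewrite -(mxrank_leqif_sup sK).2 !mxrank_ker rk.
apply/rv_veq; rewrite rv0 HD; apply/sub_kermxP.
exact: submx_trans DK sK'.
Qed.

Lemma exists_stable_b : exists k, (Bk k <= Bk k.+1)%MS.
Proof.
case: (pselect (exists k, (Bk k <= Bk k.+1)%MS)) => // nP.
have nk k : ~~ (Bk k <= Bk k.+1)%MS by apply/negP => Pk; apply: nP; exists k.
have rk k : (\rank (Bk k) + k <= n)%N.
  elim: k => [|k IH]; first by rewrite addn0 rank_leq_col.
  have lt : (Bk k.+1 < Bk k)%MS by rewrite /ltmx BkS_sub nk.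
  rewrite ltmxErank in lt; case/andP: lt => _ lt.
  by rewrite addnS; apply: leq_trans IH; rewrite ltn_add2r.
by have := rk n.+1; rewrite addnS ltnNge leq_addl.
Qed.

Lemma exists_index : exists k, im_stable n M k /\ forall j, lt j k -> ~ im_stable n M j.
Proof.
have ex := exists_stable_b.
case: (ex_minnP ex) => m Pm mmin; exists m; split; first exact/stable_iff.
move=> j /ssrnat.ltP jm /stable_iff Pj.
by have := mmin j Pj; rewrite leqNgt jm.
Qed.
End idx.

Theorem index_exists n E Ainv : exists k, is_index n E Ainv k.
Proof. exact: exists_index. Qed.

Theorem inj_C n E Ainv k y : is_index n E Ainv k ->
  inIm n (mpow n (mm n Ainv E) k) y -> veq n (mv n (mm n Ainv E) y) vzero ->
  veq n y vzero.
Proof. by move=> [st _]; apply: inj_stable. Qed.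
End CORE.

From Stdlib Require Import Reals Lra Lia Classical IndefiniteDescription.
Open Scope R_scope.

Lemma sumR_ext k f g : (forall i, (i < k)%nat -> f i = g i) -> sumR k f = sumR k g.
Proof.
induction k; simpl; intros H; [reflexivity|].
rewrite IHk by (intros; apply H; lia). rewrite H by lia. reflexivity.
Qed.

Lemma sumR_plus k f g : sumR k (fun i => f i + g i) = sumR k f + sumR k g.
Proof. induction k; simpl; [lra|]. rewrite IHk. lra. Qed.

Lemma sumR_scal k c f : sumR k (fun i => c * f i) = c * sumR k f.
Proof. induction k; simpl; [lra|]. rewrite IHk. lra. Qed.

Lemma sumR_nonneg k f : (forall i, (i < k)%nat -> 0 <= f i) -> 0 <= sumR k f.
Proof.
induction k; simpl; intros H; [lra|].
assert (0 <= f k) by (apply H; lia). assert (0 <= sumR k f) by (apply IHk; intros; apply H; lia). lra.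
Qed.

Lemma sqn_nonneg n x : 0 <= CORE.sqn n x.
Proof. unfold CORE.sqn. apply sumR_nonneg. intros. simpl. nra. Qed.

Lemma veq_refl n x : veq n x x. Proof. intros i _; reflexivity. Qed.
Lemma veq_sym n x y : veq n x y -> veq n y x. Proof. intros H i hi; rewrite H; auto. Qed.
Lemma veq_trans n x y z : veq n x y -> veq n y z -> veq n x z.
Proof. intros H1 H2 i hi; rewrite H1, H2; auto. Qed.

Lemma mv_veq n M x y : veq n x y -> forall i, mv n M x i = mv n M y i.
Proof. intros H i; unfold mv; apply sumR_ext; intros j hj; rewrite H; auto. Qed.

Lemma mv_veqM n M K x : (forall i j, (i < n)%nat -> (j < n)%nat -> M i j = K i j) ->
  veq n (mv n M x) (mv n K x).
Proof. intros H i hi; unfold mv; apply sumR_ext; intros j hj; rewrite H; auto. Qed.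

Lemma bil_veq n P x x' y y' : veq n x x' -> veq n y y' -> bil n P x y = bil n P x' y'.
Proof.
intros Hx Hy; unfold bil; apply sumR_ext; intros i hi.
rewrite Hx by auto. rewrite (mv_veq n P y y' Hy). reflexivity.
Qed.

Lemma quad_veq n P x x' : veq n x x' -> quad n P x = quad n P x'.
Proof. intros; unfold quad; apply bil_veq; auto. Qed.

Lemma sumR_zero k : sumR k (fun _ => 0) = 0.
Proof. induction k; simpl; [lra|]. rewrite IHk; lra. Qed.

Lemma quad_zero n P x : veq n x vzero -> quad n P x = 0.
Proof.
intros H; rewrite (quad_veq n P x vzero H). unfold quad, bil, vzero.
transitivity (sumR n (fun _ => 0)); [apply sumR_ext; intros; lra | apply sumR_zero].
Qed.

Lemma quad_scal n c Q y : quad n (fun a b => c * Q a b) y = c * quad n Q y.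
Proof.
unfold quad, bil, mv. rewrite <- sumR_scal. apply sumR_ext; intros i hi.
rewrite (sumR_ext n (fun j => c * Q i j * y j) (fun j => c * (Q i j * y j)))
  by (intros; ring).
rewrite sumR_scal. ring.
Qed.

Lemma deriv_sum k (f : nat -> R -> R) d s :
  (forall j, (j < k)%nat -> derivable_pt_lim (f j) s (d j)) ->
  derivable_pt_lim (fun u => sumR k (fun j => f j u)) s (sumR k d).
Proof.
induction k; intros H; simpl.
- apply (derivable_pt_lim_const 0 s).
- apply (derivable_pt_lim_plus (fun u => sumR k (fun j => f j u)) (f k)).
  + apply IHk; intros; apply H; lia.
  + apply H; lia.
Qed.

Lemma deriv_scal c f s d : derivable_pt_lim f s d ->
  derivable_pt_lim (fun u => c * f u) s (c * d).
Proof. intros H; apply (derivable_pt_lim_scal f c s d H). Qed.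

Lemma deriv_mult f g s df dg : derivable_pt_lim f s df -> derivable_pt_lim g s dg ->
  derivable_pt_lim (fun u => f u * g u) s (df * g s + f s * dg).
Proof. intros H1 H2; apply (derivable_pt_lim_mult f g s df dg H1 H2). Qed.

Lemma deriv_mv n M x s dx : has_deriv n x s dx ->
  forall p, derivable_pt_lim (fun u => mv n M (x u) p) s (mv n M dx p).
Proof.
intros H p; unfold mv.
apply (deriv_sum n (fun j u => M p j * x u j)); intros j hj.
apply deriv_scal; apply H; auto.
Qed.

Lemma deriv_quad n P x s dx : has_deriv n x s dx ->
  derivable_pt_lim (fun u => quad n P (x u)) s (bil n P dx (x s) + bil n P (x s) dx).
Proof.
intros H; unfold quad at 1, bil at 1.
unfold bil. rewrite <- sumR_plus.
apply (deriv_sum n (fun p u => x u p * mv n P (x u) p)); intros p hp.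
apply deriv_mult; [apply H; auto | apply deriv_mv; auto].
Qed.

Lemma deriv_zero_near f l r s d : (forall u, l < u < r -> f u = 0) -> l < s < r ->
  derivable_pt_lim f s d -> d = 0.
Proof.
intros Hz Hs Hd.
assert (H0 : derivable_pt_lim f s 0).
{ intros eps Heps.
  assert (Hp : 0 < Rmin (s - l) (r - s)) by (apply Rmin_case; lra).
  exists (mkposreal _ Hp); simpl; intros h hne hlt.
  assert (Hh : l < s + h < r).
  { pose proof (Rmin_l (s-l) (r-s)); pose proof (Rmin_r (s-l) (r-s)).
    apply Rabs_def2 in hlt. lra. }
  rewrite (Hz _ Hh), (Hz _ Hs). unfold Rminus. rewrite Rplus_opp_r, Rdiv_0_l, Rplus_0_l, Ropp_0, Rabs_R0. lra. }
exact (uniqueness_limite f s d 0 Hd H0).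
Qed.

Lemma nonincr g l r : (forall c, l < c < r -> exists d, derivable_pt_lim g c d /\ d <= 0) ->
  forall s u, l < s -> s <= u -> u < r -> g u <= g s.
Proof.
intros H s u Hs Hsu Hu.
destruct (Req_dec s u) as [e|ne]; [subst; lra|].
assert (H' : forall c, exists d, l < c < r -> derivable_pt_lim g c d /\ d <= 0).
{ intros c. destruct (classic (l < c < r)) as [hc|hc].
  - destruct (H c hc) as [d Hd]; exists d; auto.
  - exists 0; intros; contradiction. }
set (g' := fun c => proj1_sig (constructive_indefinite_description _ (H' c))).
assert (Hg' : forall c, l < c < r -> derivable_pt_lim g c (g' c) /\ g' c <= 0).
{ intros c hc; unfold g'; destruct (constructive_indefinite_description _ (H' c)); simpl; auto. }
destruct (MVT_cor2 g g' s u) as [c [Hc1 Hc2]].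
- lra.
- intros c hc; apply Hg'; lra.
- assert (g' c <= 0) by (apply Hg'; lra). nra.
Qed.

Lemma lim_le f D L t c : limit1_in f D L t ->
  (forall d, d > 0 -> exists s, D s /\ Rabs (s - t) < d) ->
  (exists d0, d0 > 0 /\ forall s, D s -> Rabs (s - t) < d0 -> f s <= c) -> L <= c.
Proof.
intros Hl Hne [d0 [Hd0 Hb]].
destruct (Rle_dec L c) as [h|h]; [auto|exfalso].
destruct (Hl (L - c)) as [alp [Halp Ha]]; [lra|].
destruct (Hne (Rmin alp d0)) as [s [Ds Hs]]; [apply Rmin_case; lra|].
pose proof (Rmin_l alp d0); pose proof (Rmin_r alp d0).
assert (h0 : dist R_met s t < alp) by (change (Rabs (s - t) < alp); lra).
assert (h1 := Ha s (conj Ds h0)). change (Rabs (f s - L) < L - c) in h1.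
assert (h2 := Hb s Ds ltac:(lra)).
apply Rabs_def2 in h1. lra.
Qed.

Lemma lim_ge f D L t c : limit1_in f D L t ->
  (forall d, d > 0 -> exists s, D s /\ Rabs (s - t) < d) ->
  (exists d0, d0 > 0 /\ forall s, D s -> Rabs (s - t) < d0 -> c <= f s) -> c <= L.
Proof.
intros Hl Hne [d0 [Hd0 Hb]].
assert (- L <= - c); [|lra].
apply (lim_le (fun s => - f s) D (- L) t (- c)); auto.
- apply limit_Ropp; auto.
- exists d0; split; auto. intros s Ds Hs; specialize (Hb s Ds Hs); lra.
Qed.

Lemma lim_const D t c : limit1_in (fun _ => c) D c t.
Proof. exact (limit_free (fun _ => c) D 0 t). Qed.

Lemma lim_sum k (f : nat -> R -> R) L D t :
  (forall j, (j < k)%nat -> limit1_in (f j) D (L j) t) ->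
  limit1_in (fun u => sumR k (fun j => f j u)) D (sumR k L) t.
Proof.
induction k; intros H; simpl.
- apply lim_const.
- apply (limit_plus (fun u => sumR k (fun j => f j u)) (f k)).
  + apply IHk; intros; apply H; lia.
  + apply H; lia.
Qed.

Lemma lim_mv n M x l D t : (forall p, (p < n)%nat -> limit1_in (fun s => x s p) D (l p) t) ->
  forall q, limit1_in (fun s => mv n M (x s) q) D (mv n M l q) t.
Proof.
intros H q; unfold mv. apply (lim_sum n (fun j s => M q j * x s j)); intros j hj.
apply (limit_mul (fun _ => M q j) (fun s => x s j)); [apply lim_const | auto].
Qed.

Lemma lim_quad n P x l D t : (forall p, (p < n)%nat -> limit1_in (fun s => x s p) D (l p) t) ->
  limit1_in (fun s => quad n P (x s)) D (quad n P l) t.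
Proof.
intros H; unfold quad, bil. apply (lim_sum n (fun p s => x s p * mv n P (x s) p)); intros p hp.
apply (limit_mul (fun s => x s p) (fun s => mv n P (x s) p)); [auto | apply lim_mv; auto].
Qed.

Lemma rlim_coord n x t l : right_lim n x t l ->
  forall p, (p < n)%nat -> limit1_in (fun s => x s p) (fun s => t < s) (l p) t.
Proof.
intros H p hp eps Heps. destruct (H eps Heps) as [d [Hd Hx]].
exists d; split; auto. intros s [Ds Hs]. simpl in *; unfold R_dist in *.
apply Rabs_def2 in Hs. apply Hx; auto; lra.
Qed.

Lemma llim_coord n x t l : left_lim n x t l ->
  forall p, (p < n)%nat -> limit1_in (fun s => x s p) (fun s => s < t) (l p) t.
Proof.
intros H p hp eps Heps. destruct (H eps Heps) as [d [Hd Hx]].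
exists d; split; auto. intros s [Ds Hs]. simpl in *; unfold R_dist in *.
apply Rabs_def2 in Hs. apply Hx; auto; lra.
Qed.

Lemma right_ne t : forall d, d > 0 -> exists s, t < s /\ Rabs (s - t) < d.
Proof. intros d Hd; exists (t + d/2); split; [lra|]. rewrite Rabs_right; lra. Qed.
Lemma left_ne t : forall d, d > 0 -> exists s, s < t /\ Rabs (s - t) < d.
Proof. intros d Hd; exists (t - d/2); split; [lra|]. rewrite Rabs_left; lra. Qed.

Lemma ode_M n Ei Ai Ainvi dx y : is_inverse n Ai Ainvi ->
  veq n (mv n Ei dx) (mv n Ai y) -> veq n (mv n (mm n Ainvi Ei) dx) y.
Proof.
intros Hinv H.
eapply veq_trans; [apply CORE.mv_mm|].
eapply veq_trans; [intros i hi; apply (mv_veq n Ainvi _ _ H)|].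
eapply veq_trans; [apply veq_sym, CORE.mv_mm|].
eapply veq_trans; [apply (mv_veqM n _ idm)|apply CORE.mv_idm].
intros i j hi hj; apply (Hinv i j hi hj).
Qed.

Lemma inIm_pow0 n M y : inIm n (mpow n M 0) y.
Proof. exists y; apply CORE.mv_idm. Qed.

Lemma deriv_in n M k (x : R -> vec) l r :
  (forall s, l < s < r -> inIm n (mpow n M k) (x s)) ->
  forall s dx, l < s < r -> has_deriv n x s dx -> inIm n (mpow n M k) dx.
Proof.
intros H s dx Hs Hd.
destruct (CORE.LA1 n (mpow n M k)) as [L HL].
apply HL; intros p hp. unfold vzero.
apply (deriv_zero_near (fun u => mv n L (x u) p) l r s _
  (fun u Hu => proj1 (HL (x u)) (H u Hu) p hp) Hs (deriv_mv n L x s dx Hd p)).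
Qed.

Lemma C_path n M (x : R -> vec) l r :
  (forall s, l < s < r -> exists dx, has_deriv n x s dx /\ veq n (mv n M dx) (x s)) ->
  forall k, (forall s, l < s < r -> inIm n (mpow n M k) (x s)) /\
            (forall s dx, l < s < r -> has_deriv n x s dx -> inIm n (mpow n M k) dx).
Proof.
intros Hode k.
assert (H1 : forall s, l < s < r -> inIm n (mpow n M k) (x s)).
{ induction k; intros s Hs; [apply inIm_pow0|].
  destruct (Hode s Hs) as [dx [Hd Hm]].
  destruct (deriv_in n M k x l r IHk s dx Hs Hd) as [z Hz].
  exists z. simpl.
  eapply veq_trans; [apply CORE.mv_mm|].
  eapply veq_trans; [|exact Hm].
  intros i hi; apply mv_veq; auto. }
split; auto. apply deriv_in; auto.
Qed.

Lemma index_unique n E Ainv k k' : is_index n E Ainv k -> is_index n E Ainv k' -> k = k'.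
Proof.
intros [H1 H2] [H1' H2'].
destruct (Nat.lt_total k k') as [h|[h|h]]; auto.
- exfalso; apply (H2' k h H1).
- exfalso; apply (H2 k' h H1').
Qed.

Lemma inC_iff n E Ainv k0 x : is_index n E Ainv k0 ->
  (inC n E Ainv x <-> inIm n (mpow n (mm n Ainv E) k0) x).
Proof.
intros Hk; split.
- intros [k [Hk' Hx]]. rewrite (index_unique n E Ainv k0 k Hk Hk'); auto.
- intros Hx; exists k0; auto.
Qed.

Lemma C_invariant n E Ainv y : inC n E Ainv y -> inC n E Ainv (mv n (mm n Ainv E) y).
Proof.
intros [k [Hk [z Hz]]]. exists k; split; auto.
destruct Hk as [Hst _]. apply Hst.
exists z. simpl. eapply veq_trans; [apply CORE.mv_mm|].
intros i hi; apply mv_veq; auto.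
Qed.

Definition Good n E Ainv P c : Prop :=
  (forall x, inC n E Ainv x -> c * CORE.sqn n x <= quad n P x) /\
  (forall x, quad n P x <= (/ c) * CORE.sqn n x) /\
  (forall y, inC n E Ainv y ->
     2 * bil n P (mv n (mm n Ainv E) y) y <= - c * quad n P (mv n (mm n Ainv E) y)).

Lemma Good_mono n E Ainv P c c' : 0 < c' <= c -> Good n E Ainv P c -> Good n E Ainv P c'.
Proof.
intros Hc [G1 [G2 G3]]. 
assert (Hq : forall x, inC n E Ainv x -> 0 <= quad n P x).
{ intros x Hx. pose proof (G1 x Hx). pose proof (sqn_nonneg n x). nra. }
split; [|split].
- intros x Hx. pose proof (G1 x Hx). pose proof (sqn_nonneg n x). nra.
- intros x. pose proof (G2 x). pose proof (sqn_nonneg n x).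
  assert (/ c <= / c') by (apply Rinv_le_contravar; lra). nra.
- intros y Hy. pose proof (G3 y Hy). pose proof (Hq _ (C_invariant n E Ainv y Hy)). nra.
Qed.

Lemma mode_good n E Ainv P : lyapunov_matrix n E Ainv P -> exists c, 0 < c /\ Good n E Ainv P c.
Proof.
intros [Hsym [Hpos Hneg]].
set (M := mm n Ainv E).
destruct (CORE.index_exists n E Ainv) as [k0 Hk0].
set (B := mpow n M k0).
assert (HC : forall v, inC n E Ainv v <-> inIm n B v) by (intros; apply inC_iff; auto).
destruct (CORE.quad_lower n P B) as [c1 [Hc1 H1]].
{ intros v Hv Hnz. apply Hpos; auto. apply HC; auto. }
destruct (CORE.quad_upper n P) as [c2 [Hc2 H2]].
destruct (CORE.bil_M n P M) as [Q HQ].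
destruct (CORE.quad_lower n (fun a b => -2 * Q a b) B) as [c3 [Hc3 H3]].
{ intros v Hv Hnz. rewrite quad_scal, <- HQ.
  assert (2 * bil n P (mv n M v) v < 0); [|lra].
  apply Hneg.
  - apply C_invariant, HC; auto.
  - apply HC; auto.
  - apply veq_refl.
  - intros Hz. apply Hnz. apply (CORE.inj_C n E Ainv k0); auto. }
destruct (CORE.quad_M n P M) as [Q4 HQ4].
destruct (CORE.quad_upper n Q4) as [c4 [Hc4 H4]].
set (c := Rmin c1 (Rmin (/ c2) (c3 / c4))).
assert (Hic2 : 0 < / c2) by (apply Rinv_0_lt_compat; auto).
assert (Hc34 : 0 < c3 / c4) by (apply Rdiv_lt_0_compat; auto).
assert (Hcpos : 0 < c) by (unfold c; repeat apply Rmin_case; lra).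
assert (Hc_1 : c <= c1) by (unfold c; apply Rmin_l).
assert (Hc_2 : c <= / c2) by (unfold c; eapply Rle_trans; [apply Rmin_r|apply Rmin_l]).
assert (Hc_3 : c <= c3 / c4) by (unfold c; eapply Rle_trans; [apply Rmin_r|apply Rmin_r]).
exists c; split; auto.
split; [|split].
- intros v Hv. pose proof (H1 v (proj1 (HC v) Hv)). pose proof (sqn_nonneg n v). nra.
- intros v. pose proof (H2 v). pose proof (sqn_nonneg n v).
  assert (c2 <= / c).
  { rewrite <- (Rinv_inv c2). apply Rinv_le_contravar; lra. }
  nra.
- intros y Hy. 
  pose proof (H3 y (proj1 (HC y) Hy)) as h3. rewrite quad_scal, <- HQ in h3.
  pose proof (H4 y) as h4. rewrite <- HQ4 in h4.
  pose proof (sqn_nonneg n y). unfold M in *.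
  assert (Hq : 0 <= quad n P (mv n (mm n Ainv E) y)).
  { pose proof (H1 _ (proj1 (HC _) (C_invariant n E Ainv y Hy))). pose proof (sqn_nonneg n (mv n (mm n Ainv E) y)). nra. }
  assert (c * quad n P (mv n (mm n Ainv E) y) <= c3 * CORE.sqn n y).
  { apply Rle_trans with (c3 / c4 * quad n P (mv n (mm n Ainv E) y)); [nra|].
    unfold Rdiv. apply Rle_trans with (c3 * / c4 * (c4 * CORE.sqn n y)); [nra|].
    right; field; lra. }
  lra.
Qed.

Lemma uniform_good n N E Ainv P :
  (forall i, (1 <= i <= N)%nat -> lyapunov_matrix n (E i) (Ainv i) (P i)) ->
  exists c, 0 < c /\ forall i, (1 <= i <= N)%nat -> Good n (E i) (Ainv i) (P i) c.
Proof.
induction N; intros H.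
- exists 1; split; [lra|]. intros; lia.
- destruct IHN as [c [Hc Hg]]. { intros; apply H; lia. }
  destruct (mode_good n (E (S N)) (Ainv (S N)) (P (S N))) as [c' [Hc' Hg']]. { apply H; lia. }
  exists (Rmin c c'); split. { apply Rmin_case; lra. }
  intros i hi. destruct (Nat.eq_dec i (S N)) as [->|ne].
  + apply (Good_mono _ _ _ _ c'); auto. split; [apply Rmin_case; lra|apply Rmin_r].
  + apply (Good_mono _ _ _ _ c); auto. split; [apply Rmin_case; lra|apply Rmin_l]. apply Hg; lia.
Qed.

Lemma fin_min k (Q : nat -> R -> Prop) :
  (forall p d d', 0 < d' <= d -> Q p d -> Q p d') ->
  (forall p, (p < k)%nat -> exists d, 0 < d /\ Q p d) ->
  exists d, 0 < d /\ forall p, (p < k)%nat -> Q p d.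
Proof.
intros Hm; induction k; intros H.
- exists 1; split; [lra|]; intros; lia.
- destruct IHk as [d [Hd Hq]]. { intros; apply H; lia. }
  destruct (H k) as [d' [Hd' Hq']]. { lia. }
  exists (Rmin d d'); split. { apply Rmin_case; lra. }
  intros p hp. destruct (Nat.eq_dec p k) as [->|ne].
  + apply (Hm k d'); auto. split; [apply Rmin_case; lra|apply Rmin_r].
  + apply (Hm p d); auto. split; [apply Rmin_case; lra|apply Rmin_l]. apply Hq; lia.
Qed.

Lemma deriv_cont n x t dx : has_deriv n x t dx ->
  right_lim n x t (x t) /\ left_lim n x t (x t).
Proof.
intros H.
assert (Hc : forall p, (p < n)%nat -> continuity_pt (fun s => x s p) t).
{ intros p hp. apply derivable_continuous_pt. exists (dx p). apply H; auto. }
assert (Hd : forall eps, eps > 0 -> exists d, 0 < d /\ forall p, (p < n)%nat ->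
          forall s, Rabs (s - t) < d -> Rabs (x s p - x t p) < eps).
{ intros eps Heps.
  apply (fin_min n (fun p d => forall s, Rabs (s - t) < d -> Rabs (x s p - x t p) < eps)).
  - intros p d d' Hdd Hq s Hs; apply Hq; lra.
  - intros p hp. destruct (Hc p hp eps Heps) as [alp [Halp Ha]].
    exists alp; split; [lra|]. intros s Hs.
    destruct (Req_dec s t) as [->|ne].
    + unfold Rminus; rewrite Rplus_opp_r, Rabs_R0; lra.
    + apply (Ha s); split; [split; [exact I|auto] | exact Hs]. }
split; intros eps Heps; destruct (Hd eps Heps) as [d [Hd0 Hq]]; exists d; split; auto;
  intros s Hs p hp; apply Hq; auto; apply Rabs_def1; lra.
Qed.

Lemma lim_exp c t D : (forall s, D s -> s <> t) ->
  limit1_in (fun u => exp (c * u)) D (exp (c * t)) t.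
Proof.
intros HD.
assert (Hc : continuity_pt (fun u => exp (c * u)) t).
{ apply derivable_continuous_pt. exists (exp (c * t) * (c * 1)).
  apply (derivable_pt_lim_comp (fun u => c * u) exp t (c * 1) (exp (c * t))).
  - apply deriv_scal, derivable_pt_lim_id.
  - apply derivable_pt_lim_exp. }
intros eps Heps. destruct (Hc eps Heps) as [alp [Halp Ha]].
exists alp; split; auto. intros s [Ds Hs]. apply Ha; split; auto.
split; [exact I|]. intro e; apply (HD s Ds); auto.
Qed.

Lemma deriv_exp c t : derivable_pt_lim (fun u => exp (c * u)) t (exp (c * t) * c).
Proof.
replace (exp (c * t) * c) with (exp (c * t) * (c * 1)) by ring.
apply (derivable_pt_lim_comp (fun u => c * u) exp t (c * 1) (exp (c * t))).
- apply deriv_scal, derivable_pt_lim_id.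
- apply derivable_pt_lim_exp.
Qed.

Section Sol.
Variables (n N : nat) (E A Ainv P : nat -> mat) (ts : R) (sg : R -> nat) (x : R -> vec) (c : R).
Hypothesis Hinv : forall i, (1 <= i <= N)%nat -> is_inverse n (A i) (Ainv i).
Hypothesis Hlyap : forall i, (1 <= i <= N)%nat -> lyapunov_matrix n (E i) (Ainv i) (P i).
Hypothesis Hsol : is_solution n N E A ts sg x.
Hypothesis Hjump : forall tstar i j xm xp, ts < tstar -> switch_at sg tstar i j ->
       left_lim n x tstar xm -> right_lim n x tstar xp ->
       quad n (P j) xp <= quad n (P i) xm.
Hypothesis Hc : 0 < c.
Hypothesis Hgood : forall i, (1 <= i <= N)%nat -> Good n (E i) (Ainv i) (P i) c.

Definition W u := quad n (P (sg u)) (x u).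

Lemma sg_range t : ts <= t -> (1 <= sg t <= N)%nat.
Proof. destruct Hsol as [H _]; apply H. Qed.

Lemma x_rcont t : ts <= t -> right_lim n x t (x t).
Proof.
intros Ht. destruct Hsol as [_ [_ [H0 [Hode Hjmp]]]].
destruct (Rle_lt_or_eq_dec _ _ Ht) as [lt|<-]; auto.
destruct (classic (sig_cont sg t)) as [hc|hc].
- destruct (Hode t lt hc) as [dx [Hd _]]. apply (deriv_cont n x t dx Hd).
- apply (Hjmp t lt hc).
Qed.

Section Piece.
Variables (l r : R) (i : nat).
Hypothesis Hl : ts <= l.
Hypothesis Hlr : l < r.
Hypothesis Hconst : forall s, l < s < r -> sg s = i.

Lemma piece_i : (1 <= i <= N)%nat.
Proof. rewrite <- (Hconst ((l + r) / 2)) by lra. apply sg_range; lra. Qed.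

Lemma piece_cont s : l < s < r -> sig_cont sg s.
Proof.
intros Hs. exists (Rmin (s - l) (r - s)); split. { apply Rmin_case; lra. }
intros s' Hs'. pose proof (Rmin_l (s - l) (r - s)); pose proof (Rmin_r (s - l) (r - s)).
apply Rabs_def2 in Hs'. rewrite !Hconst; auto; lra.
Qed.

Lemma piece_ode : forall s, l < s < r ->
  exists dx, has_deriv n x s dx /\ veq n (mv n (mm n (Ainv i) (E i)) dx) (x s).
Proof.
intros s Hs. destruct Hsol as [_ [_ [_ [Hode _]]]].
destruct (Hode s ltac:(lra) (piece_cont s Hs)) as [dx [Hd He]].
exists dx; split; auto. rewrite (Hconst s Hs) in He.
apply (ode_M n (E i) (A i)); auto. apply Hinv, piece_i.
Qed.

Lemma piece_C : forall s, l < s < r -> inC n (E i) (Ainv i) (x s) /\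
  forall dx, has_deriv n x s dx -> inC n (E i) (Ainv i) dx.
Proof.
intros s Hs. destruct (CORE.index_exists n (E i) (Ainv i)) as [k0 Hk0].
destruct (C_path n _ x l r piece_ode k0) as [H1 H2].
split.
- exists k0; split; auto.
- intros dx Hd; exists k0; split; auto. apply (H2 s); auto.
Qed.

Lemma piece_decay : forall s u, l < s -> s <= u -> u < r ->
  exp (c * u) * quad n (P i) (x u) <= exp (c * s) * quad n (P i) (x s).
Proof.
apply (nonincr (fun u => exp (c * u) * quad n (P i) (x u)) l r).
intros s Hs. destruct (piece_ode s Hs) as [dx [Hd Hm]].
destruct (piece_C s Hs) as [HxC HdC].
pose proof (HdC dx Hd) as HdxC.
destruct (Hgood i piece_i) as [_ [_ G3]].
destruct (Hlyap i piece_i) as [Hsym _].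
eexists; split.
- apply deriv_mult; [apply deriv_exp | apply (deriv_quad n (P i) x s dx Hd)].
- pose proof (G3 dx HdxC) as h.
  rewrite (bil_veq n (P i) _ (x s) dx dx Hm (veq_refl n dx)) in h.
  rewrite (quad_veq n (P i) _ (x s) Hm) in h.
  rewrite (CORE.bil_sym n (P i) dx (x s)) by (intros; apply Hsym; auto).
  pose proof (exp_pos (c * s)). nra.
Qed.

Lemma left_end : sg l = i /\ right_lim n x l (x l).
Proof.
split; [|apply x_rcont; lra].
destruct Hsol as [_ [[_ Hrc] _]].
destruct (Hrc l Hl) as [d [Hd Hs]].
set (s := l + Rmin d (r - l) / 2).
assert (0 < Rmin d (r - l)) by (apply Rmin_case; lra).
pose proof (Rmin_l d (r - l)); pose proof (Rmin_r d (r - l)).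
rewrite <- (Hs s) by (unfold s; lra). apply Hconst; unfold s; lra.
Qed.

Lemma right_end : exists xm, left_lim n x r xm /\ W r <= quad n (P i) xm.
Proof.
destruct Hsol as [_ [_ [_ [Hode Hjmp]]]].
destruct (classic (sig_cont sg r)) as [hc|hc].
- destruct (Hode r ltac:(lra) hc) as [dx [Hd _]].
  exists (x r); split; [apply (deriv_cont n x r dx Hd)|].
  destruct hc as [d [Hd0 Hs]].
  set (s := r - Rmin d (r - l) / 2).
  assert (0 < Rmin d (r - l)) by (apply Rmin_case; lra).
  pose proof (Rmin_l d (r - l)); pose proof (Rmin_r d (r - l)).
  assert (e : sg r = i).
  { rewrite <- (Hs s). apply Hconst; unfold s; lra. unfold s; apply Rabs_def1; lra. }
  unfold W; rewrite e; lra.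
- destruct (Hjmp r ltac:(lra) hc) as [[xm Hxm] Hxr].
  exists xm; split; auto. unfold W.
  apply (Hjump r i (sg r) xm (x r)); auto; [lra|].
  split; [auto|split; [|reflexivity]].
  exists (r - l); split; [lra|]. intros s Hs; apply Hconst; lra.
Qed.


Lemma piece_full : forall s u, l <= s -> s <= u -> u <= r ->
  exp (c * u) * W u <= exp (c * s) * W s.
Proof.
set (G := fun u => exp (c * u) * quad n (P i) (x u)).
destruct left_end as [Hsl Hrl]. destruct right_end as [xm [Hxm HWr]].
assert (Hll : limit1_in G (fun s => l < s) (exp (c * l) * quad n (P i) (x l)) l).
{ apply (limit_mul (fun u => exp (c * u)) (fun u => quad n (P i) (x u))).
  - apply lim_exp; intros; lra.
  - apply lim_quad, rlim_coord; auto. }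
assert (Hlim_r : limit1_in G (fun s => s < r) (exp (c * r) * quad n (P i) xm) r).
{ apply (limit_mul (fun u => exp (c * u)) (fun u => quad n (P i) (x u))).
  - apply lim_exp; intros; lra.
  - apply lim_quad, llim_coord; auto. }
assert (F1 : forall u, l < u < r -> G u <= exp (c * l) * quad n (P i) (x l)).
{ intros u Hu. apply (lim_ge G (fun s => l < s) _ l); auto.
  - apply right_ne.
  - exists (u - l); split; [lra|]. intros s Ds Hs. apply Rabs_def2 in Hs.
    unfold G; apply piece_decay; lra. }
assert (F2 : forall s, l < s < r -> exp (c * r) * quad n (P i) xm <= G s).
{ intros s Hs. apply (lim_le G (fun u => u < r) _ r); auto.
  - apply left_ne.
  - exists (r - s); split; [lra|]. intros u Du Hu. apply Rabs_def2 in Hu.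
    unfold G; apply piece_decay; lra. }
assert (F3 : exp (c * r) * quad n (P i) xm <= exp (c * l) * quad n (P i) (x l)).
{ apply Rle_trans with (G ((l + r) / 2)); [apply F2 | apply F1]; lra. }
assert (Fr : exp (c * r) * W r <= exp (c * r) * quad n (P i) xm).
{ pose proof (exp_pos (c * r)). nra. }
assert (Wl : W l = quad n (P i) (x l)) by (unfold W; rewrite Hsl; auto).
assert (Win : forall u, l < u < r -> W u = quad n (P i) (x u)).
{ intros u Hu; unfold W; rewrite Hconst; auto. }
intros s u Hs Hsu Hu.
destruct (Req_dec s u) as [<-|ne]; [lra|].
destruct (Req_dec s l) as [->|nsl]; destruct (Req_dec u r) as [->|nur].
- rewrite Wl; lra.
- rewrite Wl, Win by lra. apply (F1 u); lra.
- rewrite (Win s) by lra. pose proof (F2 s ltac:(lra)). unfold G in *. lra.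
- rewrite !Win by lra. apply piece_decay; lra.
Qed.

End Piece.

Lemma W_decay t0 t : ts <= t0 -> t0 <= t -> exp (c * t) * W t <= exp (c * t0) * W t0.
Proof.
intros Ht0 Ht.
assert (Hpart : piecewise_constant ts sg) by (destruct Hsol as [_ [H _]]; exact H).
destruct Hpart as [Hpart _].
destruct (Hpart (t + 1)) as [m [pts [H0 [Hm [Hinc Hcst]]]]]; [lra|].
assert (Hmono : forall j, (j <= m)%nat -> ts <= pts j).
{ induction j; intros hj; [rewrite H0; lra|].
  pose proof (Hinc j ltac:(lia)). pose proof (IHj ltac:(lia)). lra. }
assert (Claim : forall j, (j <= m)%nat -> forall s u, ts <= s -> s <= u -> u <= pts j ->
          exp (c * u) * W u <= exp (c * s) * W s).
{ induction j; intros hj s u Hs Hsu Hu.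
  - rewrite H0 in Hu. assert (s = u) by lra. subst; lra.
  - assert (Hjm : (j < m)%nat) by lia.
    pose proof (Hinc j Hjm) as Hinc_j. pose proof (Hmono j ltac:(lia)) as Hmj.
    set (i := sg ((pts j + pts (S j)) / 2)).
    assert (Hconst : forall s, pts j < s < pts (S j) -> sg s = i).
    { intros s' Hs'. unfold i. apply (Hcst j); auto; lra. }
    destruct (Rle_dec u (pts j)) as [hu|hu]; [apply IHj; auto; lia|].
    destruct (Rle_dec (pts j) s) as [hs|hs].
    + apply (piece_full (pts j) (pts (S j)) i); auto; lra.
    + apply Rle_trans with (exp (c * pts j) * W (pts j)).
      * apply (piece_full (pts j) (pts (S j)) i); auto; lra.
      * apply IHj; auto; lia || lra. }
apply (Claim m); auto; lra.
Qed.

Lemma x_in_C t : ts <= t -> inC n (E (sg t)) (Ainv (sg t)) (x t).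
Proof.
intros Ht.
assert (Hrc : forall t, ts <= t -> exists d, d > 0 /\ forall s, t <= s < t + d -> sg s = sg t)
  by (destruct Hsol as [_ [[_ H] _]]; exact H).
destruct (Hrc t Ht) as [d [Hd Hs]].
set (i := sg t). fold i in Hs.
assert (Hconst : forall s, t < s < t + d -> sg s = i) by (intros; apply Hs; lra).
destruct (CORE.index_exists n (E i) (Ainv i)) as [k0 Hk0].
apply (inC_iff n (E i) (Ainv i) k0 (x t) Hk0).
destruct (CORE.LA1 n (mpow n (mm n (Ainv i) (E i)) k0)) as [L HL].
apply HL. intros p hp. unfold vzero.
assert (Hz : forall s, t < s < t + d -> mv n L (x s) p = 0).
{ intros s Hs'. destruct (piece_C t (t + d) i Ht ltac:(lra) Hconst s Hs') as [HC _].
  apply (inC_iff n (E i) (Ainv i) k0 (x s) Hk0) in HC. apply HL; auto. }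
assert (Hlim : limit1_in (fun s => mv n L (x s) p) (fun s => t < s) (mv n L (x t) p) t).
{ apply lim_mv, rlim_coord, x_rcont; auto. }
apply Rle_antisym.
- apply (lim_le _ _ _ _ _ Hlim (right_ne t)). exists d; split; auto.
  intros s Ds Hs'. apply Rabs_def2 in Hs'. rewrite Hz; lra.
- apply (lim_ge _ _ _ _ _ Hlim (right_ne t)). exists d; split; auto.
  intros s Ds Hs'. apply Rabs_def2 in Hs'. rewrite Hz; lra.
Qed.

End Sol.

Lemma exp_split c t t0 : exp (c * t0) = exp (- (c / 2) * (t - t0)) * exp (- (c / 2) * (t - t0)) * exp (c * t).
Proof.
replace (c * t0) with ((- (c / 2) * (t - t0)) + (- (c / 2) * (t - t0)) + c * t) by field.
rewrite !exp_plus. reflexivity.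
Qed.

Lemma field_aux c S1 : 0 < c -> S1 = / c * (c * S1).
Proof. intros; field; lra. Qed.

Theorem theorem1 (n N : nat) (E A Ainv P : nat -> mat)
  (S : R -> (R -> nat) -> (R -> vec) -> Prop) :
  (forall i, (1 <= i <= N)%nat -> is_inverse n (A i) (Ainv i)) ->
  (forall i, (1 <= i <= N)%nat -> lyapunov_matrix n (E i) (Ainv i) (P i)) ->
  (forall ts sg x, S ts sg x -> is_solution n N E A ts sg x) ->
  (forall ts sg x, S ts sg x ->
     forall tstar i j xm xp, ts < tstar -> switch_at sg tstar i j ->
       left_lim n x tstar xm -> right_lim n x tstar xp ->
       quad n (P j) xp <= quad n (P i) xm) ->
  GUES n S.
Proof.
intros Hinv Hlyap HS HJ.
destruct (uniform_good n N E Ainv P Hlyap) as [c [Hc Hg]].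
exists (/ c), (c / 2). split; [apply Rinv_0_lt_compat; auto|]. split; [lra|].
intros ts sg x Hx t0 t Ht0 Ht0t.
pose proof (HS ts sg x Hx) as Hsol. pose proof (HJ ts sg x Hx) as Hjump.
assert (Hdec : exp (c * t) * W n P sg x t <= exp (c * t0) * W n P sg x t0)
  by (eapply W_decay; eauto).
assert (Hrt : (1 <= sg t <= N)%nat) by (eapply sg_range; eauto; lra).
assert (Hrt0 : (1 <= sg t0 <= N)%nat) by (eapply sg_range; eauto).
destruct (Hg _ Hrt) as [G1 _]. destruct (Hg _ Hrt0) as [_ [G2 _]].
pose proof (G1 (x t) ltac:(eapply x_in_C; eauto; lra)) as h1.
pose proof (G2 (x t0)) as h2.
fold (W n P sg x t) in h1. fold (W n P sg x t0) in h2.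
set (e := exp (- (c / 2) * (t - t0))).
assert (He : exp (c * t0) = e * e * exp (c * t)).
{ unfold e. apply exp_split. }
assert (Hep : 0 < e) by apply exp_pos.
assert (Hexp : 0 < exp (c * t)) by apply exp_pos.
set (S1 := CORE.sqn n (x t)) in *. set (S0 := CORE.sqn n (x t0)) in *.
assert (HS0 : 0 <= S0) by apply sqn_nonneg. assert (HS1 : 0 <= S1) by apply sqn_nonneg.
assert (Hw : W n P sg x t <= e * e * W n P sg x t0).
{ rewrite He in Hdec. nra. }
assert (Hic : 0 < / c) by (apply Rinv_0_lt_compat; auto).
assert (Hkey : S1 <= (/ c * e) * (/ c * e) * S0).
{ assert (c * S1 <= e * e * (/ c * S0)) by nra.
  assert (S1 = / c * (c * S1)) by (apply field_aux; lra).
  nra. }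
unfold vnorm. change (sumR n (fun i => x t i ^ 2)) with S1.
change (sumR n (fun i => x t0 i ^ 2)) with S0.
replace (exp (- (c / 2) * (t - t0))) with e by reflexivity.
apply Rle_trans with (sqrt ((/ c * e) * (/ c * e) * S0)).
- apply sqrt_le_1_alt; auto.
- rewrite sqrt_mult_alt by nra. rewrite sqrt_square by nra. lra.
Qed.
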